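(* Let $\mathbb{A}$ be as below, $S\subseteq\mathbb{A}$ finite, and $\mathcal{O}\subseteq\mathbb{A}^I$ an $S$-ordered orbit. Then every $a\in\mathcal{O}$ can be extended to an $\mathcal{O}$-duo $a\parallel b$, i.e. there is $b\in\mathcal{O}$ such that $a\parallel b$ is an $\mathcal{O}$-duo.
   Context: $\sigma_0$ is a finite vocabulary of unary and binary relations; $\mathscr{C}_0=\operatorname{Forb}(\mathscr{F})$ is a free amalgamation class of finite irreflexive $\sigma_0$-structures (every member of $\mathscr{F}$ has every two elements related, where $u,v$ are related if $u=v$ or $R(u,v)$ or $R(v,u)$ for some binary $R\in\sigma_0$; irreflexive means binary relations hold only between distinct elements); $\mathbb{A}$ is the Fraïssé limit of the class of all totally ordered (by a new symbol $<$) members of $\mathscr{C}_0$. $I$ is a finite totally ordered index set. For finite $S\subseteq\mathbb{A}$, a tuple $a\in\mathbb{A}^I$ is $S$-ordered if $a_i\notin S$ for all $i$ and $a_i<a_j$ whenever $i<j$; an $S$-ordered orbit is $\mathcal{O}=\operatorname{Aut}(\mathbb{A}/S)\cdot a$ for such $a$, where $\operatorname{Aut}(\mathbb{A}/S)$ is the group of automorphisms fixing $S$ pointwise. An $\mathcal{O}$-duo $a\parallel b$ is a pair $a,b\in\mathcal{O}$ with (1) $a_i<b_i$ for all $i\in I$; (2) $b_i<a_j$ for all $i<j$ in $I$; (3) for every binary $R\in\sigma_0$ and $i,j\in I$: $R(a_i,b_j)\iff R(a_i,a_j)\iff R(b_i,b_j)\iff R(b_i,a_j)$. *)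

(* Defs.v *)
From mathcomp Require Import all_boot.
Set Implicit Arguments. Unset Strict Implicit. Unset Printing Implicit Defensive.

(* A finite sigma_0-structure is represented on the carrier 'I_n
   (every finite structure is isomorphic to one of these). For finite
   *ordered* structures we use the natural order of 'I_n (every finite
   total order is isomorphic to it). *)
Record finStr (U B : finType) := FinStr {
  fs_n : nat;
  fs_un : U -> 'I_fs_n -> bool;
  fs_bin : B -> 'I_fs_n -> 'I_fs_n -> bool }.

Arguments fs_n {U B}.
Arguments fs_un {U B}.
Arguments fs_bin {U B}.

Section Defs.
Variables (U B : finType).

Definition fs_embedding (M N : finStr U B) (f : 'I_(fs_n M) -> 'I_(fs_n N)) :=
  injective f /\
  (forall u x, fs_un M u x = fs_un N u (f x)) /\
  (forall R x y, fs_bin M R x y = fs_bin N R (f x) (f y)).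

Definition fs_irreflexive (M : finStr U B) :=
  forall R x, fs_bin M R x x = false.

Definition fs_all_related (M : finStr U B) :=
  forall x y : 'I_(fs_n M), x = y \/ exists R, fs_bin M R x y \/ fs_bin M R y x.

Arguments fs_embedding : clear implicits.

Definition inForb (F : finStr U B -> Prop) (M : finStr U B) :=
  fs_irreflexive M /\
  ~ (exists M', F M' /\ exists f, fs_embedding M' M f).

Variables (T : Type) (uA : U -> T -> Prop) (bA : B -> T -> T -> Prop)
          (ltA : T -> T -> Prop).


Definition strict_total_order :=
  (forall x, ~ ltA x x) /\
  (forall x y z, ltA x y -> ltA y z -> ltA x z) /\
  (forall x y, ltA x y \/ x = y \/ ltA y x).

Definition ord_embedding (M : finStr U B) (f : 'I_(fs_n M) -> T) :=
  injective f /\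
  (forall u x, fs_un M u x <-> uA u (f x)) /\
  (forall R x y, fs_bin M R x y <-> bA R (f x) (f y)) /\
  (forall x y : 'I_(fs_n M), (x < y)%N <-> ltA (f x) (f y)).

Arguments ord_embedding : clear implicits.

Definition automorphism (s : T -> T) :=
  bijective s /\
  (forall u x, uA u x <-> uA u (s x)) /\
  (forall R x y, bA R x y <-> bA R (s x) (s y)) /\
  (forall x y, ltA x y <-> ltA (s x) (s y)).

(* ultrahomogeneity: every isomorphism between finite substructures
   (given by two injective enumerations g, h of the same length n with the
    same quantifier-free type) extends to an automorphism *)
Definition ultrahomogeneous :=
  forall (n : nat) (g h : 'I_n -> T),
    injective g -> injective h ->
    (forall u i, uA u (g i) <-> uA u (h i)) ->
    (forall R i j, bA R (g i) (g j) <-> bA R (h i) (h j)) ->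
    (forall i j, ltA (g i) (g j) <-> ltA (h i) (h j)) ->
    exists s, automorphism s /\ forall i, s (g i) = h i.

(* A (countable, via countType) is the Fraisse limit of the class of all
   totally ordered members of Forb(F): a countable ultrahomogeneous
   ordered structure whose age is exactly that class. *)
Definition is_fraisse_limit (F : finStr U B -> Prop) :=
  strict_total_order /\
  (forall M : finStr U B, (exists f, ord_embedding M f) <-> inForb F M) /\
  ultrahomogeneous.

(* Tuples indexed by the finite totally ordered set I = 'I_k *)
Definition S_ordered (S : T -> Prop) (k : nat) (a : 'I_k -> T) :=
  (forall i, ~ S (a i)) /\ (forall i j : 'I_k, (i < j)%N -> ltA (a i) (a j)).

Definition in_autS_orbit (S : T -> Prop) (k : nat) (a0 a : 'I_k -> T) :=
  exists s, automorphism s /\ (forall x, S x -> s x = x) /\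
            forall i, a i = s (a0 i).

Definition is_duo (S : T -> Prop) (k : nat) (a0 a b : 'I_k -> T) :=
  in_autS_orbit S a0 a /\ in_autS_orbit S a0 b /\
  (forall i, ltA (a i) (b i)) /\
  (forall i j : 'I_k, (i < j)%N -> ltA (b i) (a j)) /\
  (forall R i j,
     (bA R (a i) (b j) <-> bA R (a i) (a j)) /\
     (bA R (a i) (a j) <-> bA R (b i) (b j)) /\
     (bA R (b i) (b j) <-> bA R (b i) (a j))).

End Defs.

(* Main.v *)
Require Import Defs.
From mathcomp Require Import all_boot.
From Stdlib Require Import Classical ClassicalEpsilon.
Set Implicit Arguments. Unset Strict Implicit. Unset Printing Implicit Defensive.

Definition pb (P : Prop) : bool := if excluded_middle_informative P then true else false.
Lemma pbE (P : Prop) : pb P <-> P.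
Proof. rewrite /pb; case: excluded_middle_informative => H; split => //. Qed.
Lemma pb_iff (b : bool) (P : Prop) : (b <-> P) -> b = pb P.
Proof.
move=> h; case: b h => h.
  by apply/esym/pbE/h.
case E: (pb P) => //; move/pbE: E => /h. done.
Qed.

Section Rank.
Variables (X : finType) (lt : X -> X -> Prop).
Hypothesis lt_irr : forall x, ~ lt x x.
Hypothesis lt_trans : forall x y z, lt x y -> lt y z -> lt x z.
Hypothesis lt_tot : forall x y, lt x y \/ x = y \/ lt y x.

Definition rk (x : X) : nat := #|[pred y | pb (lt y x)]|.

Lemma rk_lt x : rk x < #|X|.
Proof.
rewrite /rk. apply: proper_card. apply/properP; split.
  by apply/subsetP.
exists x => //. rewrite inE. apply/negP => /pbE. exact: lt_irr.
Qed.

Lemma rk_mono x y : lt x y -> rk x < rk y.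
Proof.
move=> hxy; apply: proper_card; apply/properP; split.
  apply/subsetP => z; rewrite !inE => /pbE hz; apply/pbE; exact: lt_trans hz hxy.
exists x; rewrite !inE; [exact/pbE | apply/negP => /pbE; exact: lt_irr].
Qed.

Lemma rk_lt_iff x y : rk x < rk y <-> lt x y.
Proof.
split; last exact: rk_mono.
move=> h; case: (lt_tot x y) => [//|[e|e]].
  by subst; rewrite ltnn in h.
by have := rk_mono e; rewrite ltnNge (ltnW h).
Qed.

Definition rko (x : X) : 'I_#|X| := Ordinal (rk_lt x).

Lemma rko_inj : injective rko.
Proof.
move=> x y /(congr1 val) /= e.
case: (lt_tot x y) => [h|[//|h]].
  by have := rk_mono h; rewrite e ltnn.
by have := rk_mono h; rewrite e ltnn.
Qed.

Lemma rko_onto p : p \in codom rko.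
Proof. apply: inj_card_onto; first exact: rko_inj. by rewrite card_ord. Qed.

Definition rki (p : 'I_#|X|) : X := iinv (rko_onto p).
Lemma rkiK x : rki (rko x) = x.
Proof. apply: rko_inj. by rewrite /rki f_iinv. Qed.
Lemma rkoK p : rko (rki p) = p.
Proof. by rewrite /rki f_iinv. Qed.
End Rank.

Lemma relabel (U B : finType) (X : finType) (un : U -> X -> bool)
  (bin : B -> X -> X -> bool) (lt : X -> X -> Prop)
  (lt_irr : forall x, ~ lt x x)
  (lt_trans : forall x y z, lt x y -> lt y z -> lt x z)
  (lt_tot : forall x y, lt x y \/ x = y \/ lt y x) :
  exists N : finStr U B, exists h : X -> 'I_(fs_n N), exists hi : 'I_(fs_n N) -> X,
   (forall x, hi (h x) = x) /\ (forall p, h (hi p) = p) /\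
   (forall u x, fs_un N u (h x) = un u x) /\
   (forall R x y, fs_bin N R (h x) (h y) = bin R x y) /\
   (forall x y, (h x < h y)%N <-> lt x y).
Proof.
pose ri := @rki X lt lt_irr lt_trans lt_tot.
pose ro := @rko X lt lt_irr.
exists (@FinStr U B #|X| (fun u p => un u (ri p)) (fun R p q => bin R (ri p) (ri q))).
exists ro, ri.
split; first exact: rkiK.
split; first exact: rkoK.
split; first by move=> u x /=; rewrite /ri rkiK.
split; first by move=> R x y /=; rewrite /ri !rkiK.
move=> x y /=. exact: rk_lt_iff.
Qed.

Section Fr.
Variables (U B : finType) (F : finStr U B -> Prop) (T : Type)
  (uA : U -> T -> Prop) (bA : B -> T -> T -> Prop) (ltA : T -> T -> Prop).
Hypothesis HA : is_fraisse_limit uA bA ltA F.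

Lemma induced (X : finType) (e : X -> T) (he : injective e) :
  exists N : finStr U B, exists h : X -> 'I_(fs_n N), exists hi : 'I_(fs_n N) -> X,
   (forall x, hi (h x) = x) /\ (forall p, h (hi p) = p) /\
   (forall u x, fs_un N u (h x) = pb (uA u (e x))) /\
   (forall R x y, fs_bin N R (h x) (h y) = pb (bA R (e x) (e y))) /\
   (forall x y, (h x < h y)%N <-> ltA (e x) (e y)) /\ inForb F N.
Proof.
case: HA => [[irr [tr tot]] [Hage _]].
have [||| N [h [hi [K1 [K2 [K3 [K4 K5]]]]]]] :=
  @relabel U B X (fun u x => pb (uA u (e x))) (fun R x y => pb (bA R (e x) (e y)))
    (fun x y => ltA (e x) (e y)).
- by move=> x; apply: irr.
- by move=> x y z; apply: tr.
- move=> x y; case: (tot (e x) (e y)) => [h|[h|h]]; [by left|right; left|by right; right].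
  exact: he.
exists N, h, hi; do 5 (split => //).
apply/Hage; exists (e \o hi); split.
  by move=> p q /= /he /(congr1 h); rewrite !K2.
split.
  by move=> u p /=; rewrite -{1}(K2 p) K3; apply: pbE.
split.
  by move=> R p q /=; rewrite -{1}(K2 p) -{1}(K2 q) K4; apply: pbE.
by move=> p q /=; rewrite -{1}(K2 p) -{1}(K2 q) K5.
Qed.

Lemma A_irr R x : ~ bA R x x.
Proof.
have he : injective (fun _ : 'I_1 => x).
  by move=> p q _; rewrite (ord1 p) (ord1 q).
have [N [h [hi [_ [_ [_ [K4 [_ [Hirr _]]]]]]]]] := induced he.
move=> H; have := Hirr R (h ord0); rewrite K4 => /negbT/negP; apply; exact/pbE.
Qed.

Lemma noF (M : finStr U B) (FM : F M) (e : 'I_(fs_n M) -> T) (he : injective e)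
  (Hu : forall u z, fs_un M u z <-> uA u (e z))
  (Hb : forall R z w, fs_bin M R z w <-> bA R (e z) (e w)) : False.
Proof.
have [N [h [hi [K1 [K2 [K3 [K4 [_ [_ Hno]]]]]]]]] := induced he.
apply: Hno; exists M; split => //; exists h; split.
  by move=> x y /(congr1 hi); rewrite !K1.
split.
  by move=> u x; rewrite K3; apply: pb_iff.
by move=> R x y; rewrite K4; apply: pb_iff.
Qed.

Lemma LB (X : finType) (un : U -> X -> bool) (bin : B -> X -> X -> bool)
  (lt : X -> X -> Prop)
  (lt_irr : forall x, ~ lt x x)
  (lt_trans : forall x y z, lt x y -> lt y z -> lt x z)
  (lt_tot : forall x y, lt x y \/ x = y \/ lt y x)
  (Hirr : forall R x, bin R x x = false)
  (Hfree : forall (M : finStr U B) (f : 'I_(fs_n M) -> X), F M -> injective f ->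
      (forall u z, fs_un M u z = un u (f z)) ->
      (forall R z w, fs_bin M R z w = bin R (f z) (f w)) -> False) :
  exists E : X -> T, injective E /\ (forall u x, un u x <-> uA u (E x)) /\
    (forall R x y, bin R x y <-> bA R (E x) (E y)) /\
    (forall x y, lt x y <-> ltA (E x) (E y)).
Proof.
case: HA => [_ [Hage _]].
have [N [h [hi [K1 [K2 [K3 [K4 K5]]]]]]] := relabel un bin lt_irr lt_trans lt_tot.
have [g [gi [gu [gb go]]]] : exists g, @ord_embedding U B T uA bA ltA N g.
  apply/Hage; split.
    by move=> R p; rewrite -(K2 p) K4.
  move=> [M [FM [f [fi [fu fb]]]]].
  apply: (Hfree M (hi \o f)) => //.
  - by move=> x y /= /(congr1 h); rewrite !K2; apply: fi.
  - by move=> u z /=; rewrite fu -{1}(K2 (f z)) K3.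
  - by move=> R z w /=; rewrite fb -{1}(K2 (f z)) -{1}(K2 (f w)) K4.
exists (g \o h); split.
  by move=> x y /= /gi /(congr1 hi); rewrite !K1.
split; first by move=> u x /=; rewrite -gu K3.
split; first by move=> R x y /=; rewrite -gb K4.
by move=> x y /=; rewrite -go K5.
Qed.

Lemma uh_fin (Y : finType) (g h : Y -> T) :
  injective g -> injective h ->
  (forall u y, uA u (g y) <-> uA u (h y)) ->
  (forall R y z, bA R (g y) (g z) <-> bA R (h y) (h z)) ->
  (forall y z, ltA (g y) (g z) <-> ltA (h y) (h z)) ->
  exists s, automorphism uA bA ltA s /\ forall y, s (g y) = h y.
Proof.
case: HA => [_ [_ HU]] gi hi Hu Hb Ho.
move: (HU #|Y| (g \o enum_val) (h \o enum_val)
  (inj_comp gi enum_val_inj) (inj_comp hi enum_val_inj)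
  (fun u i => Hu u (enum_val i)) (fun R i j => Hb R (enum_val i) (enum_val j))
  (fun i j => Ho (enum_val i) (enum_val j))) => [s [As Hs]].
exists s; split => // y; rewrite -(enum_rankK y); exact: Hs.
Qed.

End Fr.

Lemma auto_comp (U B : finType) (T : Type) (uA : U -> T -> Prop) (bA : B -> T -> T -> Prop)
  (ltA : T -> T -> Prop) s t :
  automorphism uA bA ltA s -> automorphism uA bA ltA t ->
  automorphism uA bA ltA (fun x => t (s x)).
Proof.
move=> [bs [us [bbs os]]] [bt [ut [bbt ot]]]; split.
  exact: (bij_comp bt bs).
split; first by move=> u x; rewrite us ut.
split; first by move=> R x y; rewrite bbs bbt.
by move=> x y; rewrite os ot.
Qed.

Definition isl (A B : Type) (x : A + B) : bool := if x is inl _ then true else false.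

Theorem mainTheorem11 (U B : finType) (F : finStr U B -> Prop)
  (HF : forall M, F M -> fs_all_related M)
  (T : countType) (uA : U -> T -> Prop) (bA : B -> T -> T -> Prop)
  (ltA : T -> T -> Prop)
  (HA : is_fraisse_limit uA bA ltA F)
  (S : seq T) (k : nat) (a0 : 'I_k -> T)
  (Ha0 : S_ordered ltA (fun x => x \in S) a0)
  (a : 'I_k -> T) (Ha : in_autS_orbit uA bA ltA (fun x => x \in S) a0 a) :
  exists b : 'I_k -> T, is_duo uA bA ltA (fun x => x \in S) a0 a b.
Proof.
have HA' := HA.
case: HA' => [[irr [tr tot]] _].
case: Ha0 => [a0S a0o].
case: Ha => [sg [Asg [sgS Hsg]]].
have Asg' := Asg; case: Asg' => [[sgi sgK sgK'] [sgu [sgb sgo]]].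
have sginj : injective sg by exact: (can_inj sgK).
have aS : forall i, a i \notin S.
  move=> i; apply/negP => Hi; apply: (a0S i).
  have e := sgS _ Hi; rewrite {2}Hsg in e; by rewrite -(sginj _ _ e).
have ao : forall i j : 'I_k, (i < j)%N -> ltA (a i) (a j).
  by move=> i j hij; rewrite !Hsg -sgo; apply: a0o.
have ainj : injective a.
  move=> i j e; apply/eqP; case: (ltngtP i j) => h.
  - by have := ao _ _ h; rewrite e => /irr.
  - by have := ao _ _ h; rewrite e => /irr.
  - exact/eqP/val_inj.
pose Sl := undup S.
pose m := size Sl.
pose c (y : 'I_m + 'I_k) : T :=
  match y with inl t => tnth (in_tuple Sl) t | inr i => a i end.
have cinj : injective c.
  case=> [t|i] [t'|i'] /=.
  - move=> e; congr inl.
    have [x0 _] : exists x0 : T, True by exists (tnth (in_tuple Sl) t).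
    rewrite !(tnth_nth x0) /= in e.
    have := @nth_uniq T x0 Sl t t' (ltn_ord t) (ltn_ord t') (undup_uniq S).
    rewrite e eqxx => h; apply/val_inj/eqP; by rewrite -h.
  - move=> e; exfalso; move: (aS i'); rewrite -e -(mem_undup S) mem_tnth //.
  - move=> e; exfalso; move: (aS i); rewrite e -(mem_undup S) mem_tnth //.
  - by move=> /ainj ->.
have Airr := A_irr HA.
pose X := (('I_m + 'I_k) + 'I_k)%type.
pose phi (x : X) : 'I_m + 'I_k := match x with inl y => y | inr i => inr i end.
pose d (x : X) := c (phi x).
pose lt (x y : X) := ltA (d x) (d y) \/ (d x = d y /\ isl x /\ ~~ isl y).
have deq : forall x y, d x = d y -> x = y \/ (isl x /\ ~~ isl y) \/ (isl y /\ ~~ isl x).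
  move=> x y /cinj; case: x => [x|i]; case: y => [y|j] /=.
  - by move=> ->; left.
  - by move=> _; right; left.
  - by move=> _; right; right.
  - by case=> ->; left.
have lt_irr : forall x, ~ lt x x.
  by move=> x [/irr|[_ [->]]].
have lt_trans : forall x y z, lt x y -> lt y z -> lt x z.
  move=> x y z [h1|[e1 [i1 n1]]] [h2|[e2 [i2 n2]]].
  - by left; apply: tr h1 h2.
  - by left; rewrite -e2.
  - by left; rewrite e1.
  - by rewrite i2 in n1.
have lt_tot : forall x y, lt x y \/ x = y \/ lt y x.
  move=> x y; case: (tot (d x) (d y)) => [h|[e|h]].
  - by left; left.
  - case: (deq _ _ e) => [->|[[h1 h2]|[h1 h2]]].
    + by right; left.
    + by left; right.
    + by right; right; right.
  - by right; right; left.
have HE := @LB U B F T uA bA ltA HA X (fun u x => pb (uA u (d x)))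
   (fun R x y => pb (bA R (d x) (d y))) lt lt_irr lt_trans lt_tot.
have Hirr : forall R x, pb (bA R (d x) (d x)) = false.
  by move=> R x; apply/negbTE/negP => /pbE /Airr.
edestruct (HE Hirr) as [E [Einj [Eu [Eb Eo]]]]; last first.
have dl : forall y, d (inl y) = c y by [].
have lto : forall y z, lt (inl y) (inl z) <-> ltA (c y) (c z).
  move=> y z; split; [by case => [//|[_ [_ /=]]] | by left].
have [s [As Hs]] := uh_fin HA (g := fun y => E (inl y)) (h := c)
   (fun y z e => (congr1 (fun x => if x is inl w then w else y) (Einj _ _ e))) cinj
   (fun u y => iff_trans (iff_sym (Eu u (inl y))) (pbE _))
   (fun R y z => iff_trans (iff_sym (Eb R (inl y) (inl z))) (pbE _))
   (fun y z => iff_trans (iff_sym (Eo (inl y) (inl z))) (lto y z)).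
have As' := As; case: As' => [[si sK sK'] [su [sb so]]].
have Hrel : forall R x y, bA R (s (E x)) (s (E y)) <-> bA R (d x) (d y).
  by move=> R x y; rewrite -sb -Eb; apply: pbE.
have Hun : forall u x, uA u (s (E x)) <-> uA u (d x).
  by move=> u x; rewrite -su -Eu; apply: pbE.
have Hlt : forall x y, ltA (s (E x)) (s (E y)) <-> lt x y.
  by move=> x y; rewrite -so -Eo.
have aE : forall i, a i = s (E (inl (inr i))) by move=> i; rewrite Hs.
pose b i := s (E (inr i)).
pose c' (y : 'I_m + 'I_k) := match y with inl t => c (inl t) | inr i => b i end.
pose psi (y : 'I_m + 'I_k) : X := match y with inl t => inl (inl t) | inr i => inr i end.
have c'E : forall y, c' y = s (E (psi y)) by case => [t|i] //=; rewrite Hs.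
have cE : forall y, c y = s (E (inl y)) by move=> y; rewrite Hs.
have dpsi : forall y, d (psi y) = c y by case.
have c'inj : injective c'.
  move=> y z; rewrite !c'E => /(can_inj sK) /Einj.
  by case: y => [y|i]; case: z => [z|j] //= [->].
have [tau [Atau Htau]] := uh_fin HA cinj c'inj
   (fun u y => ltac:(rewrite !c'E !cE !Hun dpsi dl; apply: iff_refl))
   (fun R y z => ltac:(rewrite !c'E !cE !Hrel !dpsi !dl; apply: iff_refl))
   (fun y z => ltac:(rewrite !c'E !cE !Hlt lto; split; [by move=> h; left; rewrite !dpsi | case=> [h|[e [i n]]];
       [by rewrite !dpsi in h | by move: (cinj _ _ (etrans (esym (dpsi y)) (etrans e (dpsi z)))) i n => -> ->]])).
exists b; split; first by exists sg.
split.
  exists (fun x => tau (sg x)); split; first exact: auto_comp.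
  split.
    move=> x xS; rewrite sgS //.
    have /tnthP [t ->] : x \in in_tuple Sl by rewrite mem_undup.
    by apply: (Htau (inl t)).
  by move=> i; rewrite -Hsg; exact: (esym (Htau (inr i))).
split.
  by move=> i; rewrite aE /b Hlt; right.
split.
  by move=> i j hij; rewrite aE /b Hlt; left; apply: ao.
by move=> R i j; rewrite !aE /b !Hrel; split; [|split]; apply: iff_refl.
move=> M f FM finj fu fb.
have he : injective (fun z => d (f z)).
  move=> z w e; case: (HF M FM z w) => [//|[R [h|h]]].
  - by move: h; rewrite fb e => /pbE /Airr.
  - by move: h; rewrite fb e => /pbE /Airr.
apply: (noF HA FM he).
  by move=> u z; rewrite fu; apply: pbE.
by move=> R z w; rewrite fb; apply: pbE.

Qed.
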